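(* Let $r$ be a positive integer. Then $$\sum_{k = 1}^\infty \frac{( - 1)^{(r-1)k}\left(\frac{27}{5}\right)^k}{k \binom{3k}kF_{3r}^{2k}} = 2\sqrt {15}\, \frac{F_r }{L_{3r} }\arctan \bigg( \frac{\sqrt 3 }{\alpha ^r (\alpha ^r + L_r )} \bigg) - ( - 1)^{r} \frac{L_r }{L_{3r} }\log \bigg( \frac{F_{3r} }{5F_r^3 } \bigg),$$ $$\sum_{k = 1}^\infty \frac{( - 1)^{rk} 27^k }{k\binom{3k}kL_{3r}^{2k} } = \frac{2\sqrt {15}}{5}\, \frac{L_r }{F_{3r}}\arctan \bigg( \frac{\sqrt 3 }{\alpha ^r (\alpha ^r + \sqrt 5F_r )} \bigg)+ ( - 1)^r \frac{F_r }{F_{3r} }\log \bigg( \frac{L_{3r} }{L_r^3 } \bigg).$$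
   Context: $F_n$ and $L_n$ are the Fibonacci and Lucas numbers: $F_0=0$, $F_1=1$, $L_0=2$, $L_1=1$, and $X_n=X_{n-1}+X_{n-2}$ for both sequences. $\alpha=(1+\sqrt5)/2$ is the golden ratio. *)

(* Defs.v *)
From Stdlib Require Import Reals.
From Coquelicot Require Import Coquelicot.
Open Scope R_scope.

Fixpoint fib (n : nat) : nat :=
  match n with
  | O => 0%nat
  | S m => match m with
           | O => 1%nat
           | S p => (fib m + fib p)%nat
           end
  end.

Fixpoint lucas (n : nat) : nat :=
  match n with
  | O => 2%nat
  | S m => match m with
           | O => 1%nat
           | S p => (lucas m + lucas p)%nat
           end
  end.

Definition F (n : nat) : R := INR (fib n).
Definition L (n : nat) : R := INR (lucas n).

Definition alpha : R := (1 + sqrt 5) / 2.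

(* Main.v *)
Require Import Defs.
From Stdlib Require Import Reals Lra Lia Factorial.
From Coquelicot Require Import Coquelicot.
Open Scope R_scope.

Lemma atan_add (a b : R) : a * b < 1 ->
  atan a + atan b = atan ((a + b) / (1 - a * b)).
Proof.
  intros Hab.
  assert (HA := atan_bound a). assert (HB := atan_bound b).
  assert (Hc : 0 < cos (atan a + atan b)).
  { rewrite cos_plus, !cos_atan, !sin_atan.
    assert (0 < sqrt (1 + a²)) by (apply sqrt_lt_R0; unfold Rsqr; nra).
    assert (0 < sqrt (1 + b²)) by (apply sqrt_lt_R0; unfold Rsqr; nra).
    replace (1 / sqrt (1 + a²) * (1 / sqrt (1 + b²)) - a / sqrt (1 + a²) * (b / sqrt (1 + b²)))
      with ((1 - a * b) / (sqrt (1 + a²) * sqrt (1 + b²))) by (field; lra).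
    apply Rdiv_lt_0_compat; [lra | nra]. }
  assert (Hr : - (PI / 2) < atan a + atan b < PI / 2).
  { split.
    - destruct (Rlt_or_le (- (PI / 2)) (atan a + atan b)) as [h|h]; auto.
      exfalso. assert (cos (- (atan a + atan b)) <= 0).
      { apply cos_le_0; lra. }
      rewrite cos_neg in H. lra.
    - destruct (Rlt_or_le (atan a + atan b) (PI / 2)) as [h|h]; auto.
      exfalso. assert (cos (atan a + atan b) <= 0).
      { apply cos_le_0; lra. }
      lra. }
  rewrite <- (atan_tan (atan a + atan b)) by exact Hr.
  f_equal. rewrite tan_plus.
  - rewrite !tan_atan; reflexivity.
  - rewrite cos_atan. assert (0 < sqrt (1 + a²)) by (apply sqrt_lt_R0; unfold Rsqr; nra).
    apply Rgt_not_eq. unfold Rdiv; apply Rmult_lt_0_compat; [lra| apply Rinv_0_lt_compat; lra].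
  - rewrite cos_atan. assert (0 < sqrt (1 + b²)) by (apply sqrt_lt_R0; unfold Rsqr; nra).
    apply Rgt_not_eq. unfold Rdiv; apply Rmult_lt_0_compat; [lra| apply Rinv_0_lt_compat; lra].
  - lra.
  - rewrite !tan_atan; lra.
Qed.

Lemma atan_add3 (a b : R) : 3 * a * b < 1 ->
  atan (sqrt 3 * a) + atan (sqrt 3 * b) = atan (sqrt 3 * ((a + b) / (1 - 3 * a * b))).
Proof.
  intros H. assert (Hs : sqrt 3 * sqrt 3 = 3) by (apply sqrt_sqrt; lra).
  rewrite atan_add.
  - f_equal. replace (sqrt 3 * a * (sqrt 3 * b)) with ((sqrt 3 * sqrt 3) * a * b) by ring.
    rewrite Hs. field. lra.
  - replace (sqrt 3 * a * (sqrt 3 * b)) with ((sqrt 3 * sqrt 3) * a * b) by ring. rewrite Hs; lra.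
Qed.

Ltac fold_INR :=
  repeat match goal with
  | |- context [match ?m with 0%nat => 1 | S _ => INR ?m + 1 end] =>
      change (match m with 0%nat => 1 | S _ => INR m + 1 end) with (INR (S m))
  end; rewrite ?S_INR.

Lemma cont_ex (f : R -> R) x : ex_derive f x -> continuous f x.
Proof. intros H. apply (@ex_derive_continuous R_AbsRing R_NormedModule). exact H. Qed.

Lemma is_RInt_derive_R (f df : R -> R) (a b : R) :
  a <= b ->
  (forall x, a <= x <= b -> is_derive f x (df x)) ->
  (forall x, a <= x <= b -> continuous df x) ->
  is_RInt df a b (f b - f a).
Proof.
  intros Hab H1 H2.
  apply (is_RInt_derive f df a b).
  - intros x Hx. rewrite Rmin_left in Hx by lra. rewrite Rmax_right in Hx by lra. auto.
  - intros x Hx. rewrite Rmin_left in Hx by lra. rewrite Rmax_right in Hx by lra. auto.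
Qed.

Lemma is_RInt_scal_R (f : R -> R) a b k l :
  is_RInt f a b l -> is_RInt (fun t => k * f t) a b (k * l).
Proof. intros H. exact (is_RInt_scal f a b k l H). Qed.

Lemma is_RInt_plus_R (f g : R -> R) a b lf lg :
  is_RInt f a b lf -> is_RInt g a b lg -> is_RInt (fun t => f t + g t) a b (lf + lg).
Proof. intros H1 H2. exact (is_RInt_plus f g a b lf lg H1 H2). Qed.

Lemma is_RInt_minus_R (f g : R -> R) a b lf lg :
  is_RInt f a b lf -> is_RInt g a b lg -> is_RInt (fun t => f t - g t) a b (lf - lg).
Proof. intros H1 H2. exact (is_RInt_minus f g a b lf lg H1 H2). Qed.

Lemma is_RInt_ext_R (f g : R -> R) a b l :
  (forall x, Rmin a b < x < Rmax a b -> f x = g x) -> is_RInt f a b l -> is_RInt g a b l.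
Proof. intros H1 H2. exact (is_RInt_ext f g a b l H1 H2). Qed.

Lemma beta_int (n m : nat) :
  is_RInt (fun t => t ^ m * (1 - t) ^ n) 0 1
    (INR (fact m) * INR (fact n) / INR (fact (m + n + 1))).
Proof.
  revert m; induction n as [|n IH]; intros m.
  - apply (is_RInt_ext_R (fun t => t ^ m)).
    { intros; simpl; ring. }
    replace (INR (fact m) * INR (fact 0) / INR (fact (m + 0 + 1)))
      with ((1 ^ S m / INR (S m)) - (0 ^ S m / INR (S m))).
    2:{ rewrite Nat.add_0_r, Nat.add_1_r. rewrite pow1. idtac.
        simpl pow. rewrite Rmult_0_l. match goal with |- context[fact (S m)] => change (fact (S m)) with (S m * fact m)%nat end. rewrite mult_INR. simpl (fact 0). change (INR 1) with 1. field.
        split; [apply INR_fact_neq_0| apply not_0_INR; lia]. }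
    apply (is_RInt_derive_R (fun t => t ^ S m / INR (S m))); [lra| |].
    + intros x _. rewrite S_INR. auto_derive. { assert (0 <= INR m) by apply pos_INR. lra. } simpl pred. fold_INR. field. assert (0 <= INR m) by apply pos_INR. lra.
    + intros x _. apply cont_ex. auto_derive. auto.
  - set (g := fun t => t ^ S m * (1 - t) ^ n).
    set (V := fun t => t ^ S m * (1 - t) ^ S n).
    set (dV := fun t => INR (S m) * t ^ m * (1 - t) ^ S n - INR (S n) * (t ^ S m * (1 - t) ^ n)).
    assert (HV : is_RInt dV 0 1 (V 1 - V 0)).
    { apply is_RInt_derive_R; [lra| |].
      - intros x _. unfold V, dV. auto_derive; auto. simpl pred. fold_INR. cbn [pow]. unfold Rminus. ring.
      - intros x _. apply cont_ex. unfold dV. auto_derive. auto. }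
    assert (HI := IH (S m)).
    apply (is_RInt_ext_R (fun t => / INR (S m) * (dV t + INR (S n) * g t))).
    { intros t _. unfold dV, g. field. rewrite S_INR. assert (0 <= INR m) by apply pos_INR. lra. }
    replace (INR (fact m) * INR (fact (S n)) / INR (fact (m + S n + 1)))
      with (/ INR (S m) * ((V 1 - V 0) + INR (S n) *
        (INR (fact (S m)) * INR (fact n) / INR (fact (S m + n + 1))))).
    { apply is_RInt_scal_R, is_RInt_plus_R; auto. apply is_RInt_scal_R; auto. }
    unfold V. replace (1 ^ S m * (1 - 1) ^ S n - 0 ^ S m * (1 - 0) ^ S n) with 0 by (simpl; ring).
    replace (S m + n + 1)%nat with (m + S n + 1)%nat by lia.
    change (fact (S m)) with (S m * fact m)%nat. change (fact (S n)) with (S n * fact n)%nat.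
    rewrite !mult_INR. field. split; [apply INR_fact_neq_0|].
    rewrite S_INR. assert (0 <= INR m) by apply pos_INR. lra.
Qed.

Lemma coef_int (n : nat) :
  is_RInt (fun t => 2 * (t * (1 - t)) * (t * (1 - t) ^ 2) ^ n) 0 1
    (1 / (INR (S n) * Binomial.C (3 * S n) (S n))).
Proof.
  apply (is_RInt_ext_R (fun t => 2 * (t ^ S n * (1 - t) ^ (2 * n + 1)))).
  { intros t _. rewrite Rpow_mult_distr, <- pow_mult, pow_add. simpl. ring. }
  replace (1 / (INR (S n) * Binomial.C (3 * S n) (S n))) with
    (2 * (INR (fact (S n)) * INR (fact (2 * n + 1)) / INR (fact (S n + (2 * n + 1) + 1)))).
  { apply is_RInt_scal_R, beta_int. }
  unfold Binomial.C.
  replace (3 * S n - S n)%nat with (S (2 * n + 1)) by lia.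
  replace (S n + (2 * n + 1) + 1)%nat with (3 * S n)%nat by lia.
  change (fact (S (2 * n + 1))) with (S (2 * n + 1) * fact (2 * n + 1))%nat.
  rewrite !mult_INR, !S_INR, plus_INR, mult_INR. simpl (INR 2). simpl (INR 1).
  assert (0 <= INR n) by apply pos_INR.
  assert (INR (fact (3 * S n)) <> 0) by apply INR_fact_neq_0.
  assert (INR (fact (2 * n + 1)) <> 0) by apply INR_fact_neq_0.
  assert (INR (fact (S n)) <> 0) by apply INR_fact_neq_0.
  field. repeat split; try lra.
Qed.

Lemma partial_closed (x t : R) (N : nat) : 1 - x * (t * (1 - t) ^ 2) <> 0 ->
  sum_n (fun j => x ^ S j * (2 * (t * (1 - t)) * (t * (1 - t) ^ 2) ^ j)) N
  = 2 * x * (t * (1 - t)) * (1 - (x * (t * (1 - t) ^ 2)) ^ S N) / (1 - x * (t * (1 - t) ^ 2)).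
Proof.
  intros H. match goal with |- ?a = ?b => change (@eq R a b) end.
  set (u := t * (1 - t) ^ 2) in *.
  induction N as [|N IH].
  - rewrite sum_O. simpl pow. field. exact H.
  - rewrite sum_Sn, IH. change (plus ?a ?b) with (a + b).
    rewrite <- !tech_pow_Rmult, Rpow_mult_distr. field. exact H.
Qed.

Lemma partial_int (x : R) (N : nat) :
  is_RInt (fun t => sum_n (fun j => x ^ S j * (2 * (t * (1 - t)) * (t * (1 - t) ^ 2) ^ j)) N) 0 1
    (sum_n (fun n => x ^ S n / (INR (S n) * Binomial.C (3 * S n) (S n))) N).
Proof.
  induction N as [|N IH].
  - apply (is_RInt_ext_R (fun t => x ^ 1 * (2 * (t * (1 - t)) * (t * (1 - t) ^ 2) ^ 0))).
    { intros; rewrite sum_O; reflexivity. }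
    rewrite sum_O. unfold Rdiv. rewrite <- (Rmult_1_l (/ _)). apply is_RInt_scal_R.
    exact (coef_int 0).
  - apply (is_RInt_ext_R (fun t => sum_n (fun j => x ^ S j * (2 * (t * (1 - t)) * (t * (1 - t) ^ 2) ^ j)) N
        + x ^ S (S N) * (2 * (t * (1 - t)) * (t * (1 - t) ^ 2) ^ S N))).
    { intros; rewrite sum_Sn; reflexivity. }
    rewrite sum_Sn. apply is_RInt_plus_R; auto.
    unfold Rdiv. rewrite <- (Rmult_1_l (/ _)). apply is_RInt_scal_R.
    exact (coef_int (S N)).
Qed.

Lemma series_int (x I q : R) :
  (forall t, 0 <= t <= 1 -> Rabs (x * (t * (1 - t) ^ 2)) <= q) -> q < 1 ->
  is_RInt (fun t => 2 * x * (t * (1 - t)) / (1 - x * (t * (1 - t) ^ 2))) 0 1 I ->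
  is_series (fun n => x ^ S n / (INR (S n) * Binomial.C (3 * S n) (S n))) I.
Proof.
  intros Hq Hq1 HI.
  set (a := fun n => x ^ S n / (INR (S n) * Binomial.C (3 * S n) (S n))).
  assert (Hq0 : 0 <= q).
  { specialize (Hq 0 ltac:(lra)). pose proof (Rabs_pos (x * (0 * (1 - 0) ^ 2))). lra. }
  assert (Hnz : forall t, 0 <= t <= 1 -> 0 < 1 - x * (t * (1 - t) ^ 2)).
  { intros t Ht. specialize (Hq t Ht). apply Rabs_le_between in Hq. lra. }
  set (M := 2 * Rabs x / (1 - q)).
  assert (Hb : forall N, Rabs (sum_n a N - I) <= M * q ^ S N).
  { intros N.
    assert (HD := is_RInt_minus_R _ _ 0 1 _ _ (partial_int x N) HI).
    replace (M * q ^ S N) with ((1 - 0) * (M * q ^ S N)) by ring.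
    refine (norm_RInt_le_const (V:=R_NormedModule) _ 0 1 (sum_n a N - I) _ _ _ HD); [lra|].
    intros t Ht. cbv beta. assert (Hn : forall z : R, norm z = Rabs z) by reflexivity. rewrite Hn. change (norm ?z) with (Rabs z).
    specialize (Hnz t Ht). specialize (Hq t Ht).
    rewrite partial_closed by lra.
    replace (2 * x * (t * (1 - t)) * (1 - (x * (t * (1 - t) ^ 2)) ^ S N) / (1 - x * (t * (1 - t) ^ 2)) -
       2 * x * (t * (1 - t)) / (1 - x * (t * (1 - t) ^ 2)))
      with (- (2 * x * (t * (1 - t)) * (x * (t * (1 - t) ^ 2)) ^ S N / (1 - x * (t * (1 - t) ^ 2))))
      by (field; lra).
    assert (Ht1 : Rabs (t * (1 - t)) <= 1).
    { rewrite Rabs_pos_eq by nra. nra. }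
    set (A1 := t * (1 - t)) in *.
    set (W := x * (t * (1 - t) ^ 2)) in *.
    rewrite Rabs_Ropp. unfold Rdiv. rewrite !Rabs_mult, <- RPow_abs, Rabs_inv.
    rewrite (Rabs_pos_eq (1 - W)) by lra.
    assert (Hp : Rabs W ^ S N <= q ^ S N).
    { apply pow_incr. split; [apply Rabs_pos| exact Hq]. }
    assert (Hi : / (1 - W) <= / (1 - q)).
    { apply Rinv_le_contravar; [lra|]. apply Rabs_le_between in Hq; lra. }
    unfold M. rewrite Rabs_pos_eq with (x := 2) by lra.
    assert (0 <= Rabs x) by apply Rabs_pos.
    assert (0 <= Rabs W ^ S N) by (apply pow_le, Rabs_pos).
    assert (0 <= / (1 - W)) by (apply Rlt_le, Rinv_0_lt_compat; lra).
    assert (0 <= Rabs A1) by apply Rabs_pos.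
    unfold Rdiv.
    apply Rle_trans with (2 * Rabs x * 1 * (q ^ S N) * / (1 - q)); [|right; ring].
    set (B1 := Rabs A1) in *.
    set (A2 := Rabs W ^ S N) in *.
    set (A3 := / (1 - W)) in *.
    set (X := Rabs x) in *.
    assert (0 <= 2 * X * B1) by (apply Rmult_le_pos; lra).
    assert (0 <= 2 * X * B1 * A2) by (apply Rmult_le_pos; lra).
    assert (2 * X * B1 <= 2 * X * 1) by (apply Rmult_le_compat_l; lra).
    assert (2 * X * B1 * A2 <= 2 * X * 1 * q ^ S N) by (apply Rmult_le_compat; lra).
    apply Rmult_le_compat; lra. }
  change (is_lim_seq (sum_n a) I).
  assert (Hg : is_lim_seq (fun N => M * q ^ S N) 0).
  { replace (Finite 0) with (Rbar_mult M 0) by (simpl; f_equal; ring).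
    apply is_lim_seq_scal_l.
    apply (is_lim_seq_incr_1 (fun n => q ^ n)). apply is_lim_seq_geom. rewrite Rabs_pos_eq; lra. }
  apply (is_lim_seq_le_le (fun N => I - M * q ^ S N) _ (fun N => I + M * q ^ S N)).
  - intros N. specialize (Hb N). apply Rabs_le_between in Hb. lra.
  - replace (Finite I) with (Finite (I - 0)) by (f_equal; ring).
    apply is_lim_seq_minus'; [apply is_lim_seq_const| exact Hg].
  - replace (Finite I) with (Finite (I + 0)) by (f_equal; ring).
    apply is_lim_seq_plus'; [apply is_lim_seq_const| exact Hg].
Qed.

Lemma is_derive_eq (f : R -> R) x l l' : is_derive f x l -> l = l' -> is_derive f x l'.
Proof. intros H <-; exact H. Qed.

Lemma deriv_atan_lin (p q s t : R) : s <> 0 ->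
  is_derive (fun t => atan ((p * t + q) / s)) t (p * s / (s ^ 2 + (p * t + q) ^ 2)).
Proof.
  intros Hs.
  eapply is_derive_eq.
  { apply (is_derive_comp atan (fun t => (p * t + q) / s)).
    - apply is_derive_atan.
    - auto_derive; [exact I| reflexivity]. }
  change (scal ?a ?b) with (a * b). unfold Rsqr.
  match goal with |- ?a = ?b => change (@eq R a b) end.
  assert (0 < s ^ 2) by (pose proof (Rlt_0_sqr s Hs); unfold Rsqr in *; simpl; lra).
  assert (0 <= (p * t + q) ^ 2) by (apply pow2_ge_0).
  field. split; auto. lra.
Qed.

Lemma is_derive_plus_R (f g : R -> R) x df dg :
  is_derive f x df -> is_derive g x dg -> is_derive (fun t => f t + g t) x (df + dg).
Proof. intros H1 H2. exact (is_derive_plus f g x df dg H1 H2). Qed.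

Definition Pc y := 2 * y * (y - 1) ^ 2 / (y ^ 2 - y + 1).
Definition Bc y := 18 * y ^ 2 - 3 * y * Pc y.
Definition Cc y := -2 * y * (y ^ 2 + y + 1) ^ 2 / (y ^ 2 - y + 1).
Definition m2 y := y ^ 2 + 4 * y + 1.
Definition Dc y := Cc y + Bc y * m2 y / (6 * y).
Definition scf y := sqrt (3 * (y ^ 2 - 1) ^ 2).
Definition Hf y t := Pc y / (6 * y) * ln ((3 * y * t + (y - 1) ^ 2) ^ 2)
  + Bc y / (18 * y ^ 2) * ln ((6 * y * t + - m2 y) ^ 2 + 3 * (y ^ 2 - 1) ^ 2)
  + 2 * Dc y / (3 * y * scf y) * atan ((6 * y * t + - m2 y) / scf y).
Definition xf y := -27 * y ^ 3 / (y ^ 3 - 1) ^ 2.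
Definition ff y t := 2 * xf y * (t * (1 - t)) / (1 - xf y * (t * (1 - t) ^ 2)).

Lemma Hf_deriv y t : 5/2 <= Rabs y -> 0 <= t <= 1 -> is_derive (Hf y) t (ff y t).
Proof.
  intros Hy Ht.
  assert (Hy2 : 25/4 <= y ^ 2).
  { destruct (Rle_or_lt 0 y); [rewrite Rabs_pos_eq in Hy | rewrite Rabs_left in Hy]; nra. }
  assert (Hsc2 : scf y ^ 2 = 3 * (y ^ 2 - 1) ^ 2).
  { unfold scf. apply pow2_sqrt. nra. }
  assert (Hsc : scf y <> 0).
  { intro Hc. rewrite Hc in Hsc2. nra. }
  assert (Hl1 : 0 < 3 * y * t + (y - 1) ^ 2).
  { destruct (Rle_or_lt 0 y); nra. }
  assert (Hl2 : 0 < (6 * y * t + - m2 y) ^ 2 + 3 * (y ^ 2 - 1) ^ 2).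
  { assert (0 < (y ^ 2 - 1) ^ 2) by (apply pow_lt; lra).
    pose proof (pow2_ge_0 (6 * y * t + - m2 y)). lra. }
  unfold Hf. eapply is_derive_eq.
  { apply is_derive_plus_R.
    - auto_derive.
      + simpl in Hl1, Hl2. split; [|split; [|exact I]].
        * apply Rmult_lt_0_compat; [lra|]. rewrite Rmult_1_r; lra.
        * exact Hl2.
      + reflexivity.
    - apply is_derive_scal, deriv_atan_lin, Hsc. }
  rewrite Hsc2. simpl in Hl1, Hl2.
  assert (Hy0 : y <> 0) by (intro; subst; lra).
  assert (Hq : y ^ 2 - y + 1 <> 0) by nra.
  assert (Hc : y ^ 3 - 1 <> 0) by (intro Hc; destruct (Rle_or_lt 0 y); nra).
  unfold ff, xf, Dc, Cc, Bc, Pc. unfold m2 in *.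
  match goal with |- ?a = ?b => change (@eq R a b) end.
  field.
  assert (HR : 0 < 3 * (y ^ 2 - 1) ^ 2 + (6 * y * t + - (y ^ 2 + 4 * y + 1)) ^ 2) by (simpl; lra).
  repeat split; auto.
  - replace ((y ^ 3 - 1) ^ 2 - -27 * y ^ 3 * (t * (1 - t) ^ 2)) with
      ((3 * y * t + (y - 1) * (y - 1)) * (3 * (y ^ 2 - 1) ^ 2 + (6 * y * t + - (y ^ 2 + 4 * y + 1)) ^ 2) / 4)
      by (simpl; field).
    apply Rgt_not_eq. apply Rdiv_lt_0_compat; [|lra]. apply Rmult_lt_0_compat; lra.
  - lra.
  - lra.
Qed.


Lemma ln_div' a b : 0 < a -> 0 < b -> ln (a / b) = ln a - ln b.
Proof. intros. unfold Rdiv. rewrite ln_mult, ln_Rinv; try apply Rinv_0_lt_compat; auto; ring. Qed.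

Lemma div_s3 a b : b <> 0 -> a / (sqrt 3 * b) = sqrt 3 * (a / (3 * b)).
Proof.
  intros Hb. assert (Hs : sqrt 3 * sqrt 3 = 3) by (apply sqrt_sqrt; lra).
  assert (sqrt 3 <> 0) by (intro Hc; rewrite Hc in Hs; lra).
  replace (3 * b) with (sqrt 3 * sqrt 3 * b) by (rewrite Hs; ring). field. auto.
Qed.

Definition G y := y / (y ^ 2 - y + 1) * ln ((y - 1) ^ 2 / (y ^ 2 + y + 1))
  + 2 * sqrt 3 * y * (y - 1) / (y ^ 3 + 1) * atan (sqrt 3 / (2 * y + 1)).

Lemma sq_pos a : a <> 0 -> 0 < a ^ 2.
Proof. intros H. pose proof (Rlt_0_sqr a H). unfold Rsqr in *. simpl. lra. Qed.

Lemma div_lt_1 n d : 0 < d -> n < d -> n / d < 1.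
Proof. intros Hd Hn. apply (Rmult_lt_reg_r d); auto. unfold Rdiv. rewrite Rmult_assoc, Rinv_l by lra. lra. Qed.

Lemma Hf_eval y : 5/2 <= Rabs y -> Hf y 1 - Hf y 0 = G y.
Proof.
  intros Hy.
  assert (Hy2 : 25/4 <= y ^ 2).
  { destruct (Rle_or_lt 0 y); [rewrite Rabs_pos_eq in Hy | rewrite Rabs_left in Hy]; nra. }
  assert (Hy0 : y <> 0) by (intro; subst; lra).
  assert (Hq : 0 < y ^ 2 - y + 1) by nra.
  assert (Hp : 0 < y ^ 2 + y + 1) by nra.
  assert (H1 : 0 < (y - 1) ^ 2) by (apply sq_pos; intro; nra).
  assert (Hy21 : 0 < y ^ 2 - 1) by lra.
  assert (H2y : 16 <= (2 * y + 1) ^ 2).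
  { destruct (Rle_or_lt 0 y); [rewrite Rabs_pos_eq in Hy | rewrite Rabs_left in Hy]; nra. }
  assert (H2y0 : 2 * y + 1 <> 0) by (intro Hc; rewrite Hc in H2y; lra).
  assert (Hs : sqrt 3 * sqrt 3 = 3) by (apply sqrt_sqrt; lra).
  assert (Hs0 : 0 < sqrt 3) by (apply sqrt_lt_R0; lra).
  assert (Hy3p : y ^ 3 + 1 <> 0).
  { replace (y ^ 3 + 1) with ((y + 1) * (y ^ 2 - y + 1)) by ring. apply Rmult_integral_contrapositive.
    split; [intro; nra| lra]. }
  assert (Hy1 : y + 1 <> 0) by (intro; nra).
  assert (Hs0' : sqrt 3 <> 0) by lra.
  assert (Hy21' : y ^ 2 - 1 <> 0) by lra.
  assert (Hq' : y ^ 2 - y + 1 <> 0) by lra.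
  assert (Hsc : scf y = sqrt 3 * (y ^ 2 - 1)).
  { unfold scf. rewrite sqrt_mult by (try apply pow2_ge_0; lra). rewrite sqrt_pow2 by lra. reflexivity. }
  assert (Hscn : scf y <> 0) by (rewrite Hsc; apply Rmult_integral_contrapositive; auto).
  set (Z := 1 / (2 * y + 1)).
  set (T := atan (sqrt 3 * Z)).
  set (A := - (y - 1) ^ 2 / (3 * (y ^ 2 - 1))).
  set (B := - m2 y / (3 * (y ^ 2 - 1))).
  assert (HA : atan ((6 * y * 1 + - m2 y) / scf y) = atan (sqrt 3 * A)).
  { rewrite Hsc. unfold A. rewrite <- div_s3 by lra. f_equal. unfold m2. field. lra. }
  assert (HB : atan ((6 * y * 0 + - m2 y) / scf y) = atan (sqrt 3 * B)).
  { rewrite Hsc. unfold B. rewrite <- div_s3 by lra. f_equal. field. lra. }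
  assert (HZ1 : 3 * Z * Z < 1).
  { replace (3 * Z * Z) with (3 / (2 * y + 1) ^ 2) by (unfold Z; field; auto).
    apply div_lt_1; lra. }
  set (W1 := (Z + Z) / (1 - 3 * Z * Z)).
  assert (HZ2 : 3 * W1 * Z < 1).
  { replace (3 * W1 * Z) with (6 / ((2 * y + 1) ^ 2 - 3)) by (unfold W1, Z; field; split; auto; lra).
    apply div_lt_1; lra. }
  assert (HAB : 3 * A * - B < 1).
  { replace (3 * A * - B) with (- m2 y / (3 * (y + 1) ^ 2)).
    2:{ unfold A, B. field. split; [lra|]. intro Hc. nra. }
    assert (0 < (y + 1) ^ 2) by (apply sq_pos; intro; nra).
    apply div_lt_1; [lra|]. unfold m2. nra. }
  assert (HT : atan (sqrt 3 * A) - atan (sqrt 3 * B) = 3 * T).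
  { replace (atan (sqrt 3 * A) - atan (sqrt 3 * B)) with (atan (sqrt 3 * A) + atan (sqrt 3 * - B))
      by (replace (sqrt 3 * - B) with (- (sqrt 3 * B)) by ring; rewrite atan_opp; ring).
    rewrite atan_add3 by exact HAB.
    replace (3 * T) with (T + T + T) by ring. unfold T.
    rewrite atan_add3 by exact HZ1. fold W1. rewrite atan_add3 by exact HZ2.
    f_equal. f_equal. unfold W1, Z, A, B, m2. field.
    repeat split; auto.
    + intro Hc. nra.
    + intro Hc. nra.
    + replace ((y ^ 2 - 1) * (3 * (y ^ 2 - 1)) - - (y - 1) ^ 2 * - - (y ^ 2 + 4 * y + 1))
        with ((y - 1) ^ 2 * (4 * y ^ 2 + 10 * y + 4)) by ring.
      apply Rgt_not_eq. apply Rmult_lt_0_compat; [lra|].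
      destruct (Rle_or_lt 0 y); [rewrite Rabs_pos_eq in Hy | rewrite Rabs_left in Hy]; nra. }
  assert (HK : 2 * Dc y / (3 * y * scf y) * 3 = 2 * sqrt 3 * y * (y - 1) / (y ^ 3 + 1)).
  { rewrite Hsc. replace (2 * sqrt 3 * y * (y - 1) / (y ^ 3 + 1))
      with (2 * (sqrt 3 * sqrt 3) * y * (y - 1) / ((y ^ 3 + 1) * sqrt 3)) by (field; auto).
    rewrite Hs. unfold Dc, Cc, Bc, Pc, m2. field. repeat split; auto. }
  assert (HG : atan (sqrt 3 / (2 * y + 1)) = T).
  { unfold T, Z. f_equal. field. auto. }
  unfold G, Hf. rewrite HG, HA, HB.
  replace (ln ((3 * y * 1 + (y - 1) ^ 2) ^ 2)) with (2 * ln (y ^ 2 + y + 1)).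
  2:{ replace (3 * y * 1 + (y - 1) ^ 2) with (y ^ 2 + y + 1) by ring. rewrite ln_pow by lra. simpl (INR 2). ring. }
  replace (ln ((3 * y * 0 + (y - 1) ^ 2) ^ 2)) with (2 * ln ((y - 1) ^ 2)).
  2:{ replace (3 * y * 0 + (y - 1) ^ 2) with ((y - 1) ^ 2) by ring. rewrite (ln_pow ((y - 1) ^ 2)) by lra. simpl (INR 2). ring. }
  replace (ln ((6 * y * 1 + - m2 y) ^ 2 + 3 * (y ^ 2 - 1) ^ 2)) with (ln 4 + (ln ((y - 1) ^ 2) + ln (y ^ 2 + y + 1))).
  2:{ replace ((6 * y * 1 + - m2 y) ^ 2 + 3 * (y ^ 2 - 1) ^ 2) with (4 * ((y - 1) ^ 2 * (y ^ 2 + y + 1))) by (unfold m2; ring).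
      rewrite !ln_mult; try lra. apply Rmult_lt_0_compat; lra. }
  replace (ln ((6 * y * 0 + - m2 y) ^ 2 + 3 * (y ^ 2 - 1) ^ 2)) with (ln 4 + 2 * ln (y ^ 2 + y + 1)).
  2:{ replace ((6 * y * 0 + - m2 y) ^ 2 + 3 * (y ^ 2 - 1) ^ 2) with (4 * (y ^ 2 + y + 1) ^ 2) by (unfold m2; ring).
      rewrite ln_mult, ln_pow; try lra. simpl (INR 2). ring. apply pow_lt; lra. }
  rewrite ln_div' by lra.
  rewrite <- HK.
  replace (Pc y / (6 * y) * (2 * ln (y ^ 2 + y + 1)) +
    Bc y / (18 * y ^ 2) * (ln 4 + (ln ((y - 1) ^ 2) + ln (y ^ 2 + y + 1))) +
    2 * Dc y / (3 * y * scf y) * atan (sqrt 3 * A) -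
    (Pc y / (6 * y) * (2 * ln ((y - 1) ^ 2)) +
     Bc y / (18 * y ^ 2) * (ln 4 + 2 * ln (y ^ 2 + y + 1)) +
     2 * Dc y / (3 * y * scf y) * atan (sqrt 3 * B)))
   with ((Bc y / (18 * y ^ 2) - Pc y / (3 * y)) * (ln ((y - 1) ^ 2) - ln (y ^ 2 + y + 1))
     + 2 * Dc y / (3 * y * scf y) * (atan (sqrt 3 * A) - atan (sqrt 3 * B))) by (field; repeat split; auto).
  rewrite HT.
  replace (Bc y / (18 * y ^ 2) - Pc y / (3 * y)) with (y / (y ^ 2 - y + 1)).
  2:{ unfold Bc, Pc. field. split; lra. }
  ring.
Qed.

Lemma u_bound t : 0 <= t <= 1 -> 0 <= t * (1 - t) ^ 2 <= 4 / 27.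
Proof.
  intros Ht. split.
  - apply Rmult_le_pos; [lra| apply pow2_ge_0].
  - assert (0 <= (1 - 3 * t) ^ 2 * (4 - 3 * t)) by (apply Rmult_le_pos; [apply pow2_ge_0| lra]).
    nra.
Qed.

Lemma gen_series y : 5/2 <= Rabs y ->
  is_series (fun n => xf y ^ S n / (INR (S n) * Binomial.C (3 * S n) (S n))) (G y).
Proof.
  intros Hy.
  assert (Hy0 : y <> 0) by (intro; subst; rewrite Rabs_R0 in Hy; lra).
  assert (Hc : (y ^ 3 - 1) ^ 2 <> 0).
  { apply Rgt_not_eq, sq_pos. intro Hc.
    destruct (Rle_or_lt 0 y); [rewrite Rabs_pos_eq in Hy | rewrite Rabs_left in Hy]; nra. }
  assert (Hc1 : y ^ 3 - 1 <> 0) by (intro Hc1; apply Hc; rewrite Hc1; ring).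
  assert (Hx : Rabs (xf y) * (4 / 27) < 1).
  { unfold xf. rewrite Rabs_div by auto. rewrite (Rabs_pos_eq ((y ^ 3 - 1) ^ 2)) by apply pow2_ge_0.
    rewrite Rabs_mult, (Rabs_left (-27)) by lra. rewrite <- RPow_abs. replace (- -27) with 27 by ring.
    replace (27 * Rabs y ^ 3 / (y ^ 3 - 1) ^ 2 * (4 / 27)) with (4 * Rabs y ^ 3 / (y ^ 3 - 1) ^ 2) by (field; auto).
    apply div_lt_1; [assert (0 <= (y ^ 3 - 1) ^ 2) by apply pow2_ge_0; lra|].
    destruct (Rle_or_lt 0 y).
    + rewrite Rabs_pos_eq in * by lra.
      assert (H3 : 15 <= y ^ 3) by (simpl; nra). nra.
    + rewrite Rabs_left in * by lra.
      assert (H3 : y ^ 3 <= -15) by (simpl; nra).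
      replace ((- y) ^ 3) with (- y ^ 3) by ring. nra. }
  assert (Hb : forall t, 0 <= t <= 1 -> Rabs (xf y * (t * (1 - t) ^ 2)) <= Rabs (xf y) * (4 / 27)).
  { intros t Ht. destruct (u_bound t Ht). rewrite Rabs_mult, (Rabs_pos_eq (t * _)) by lra.
    apply Rmult_le_compat_l; [apply Rabs_pos| lra]. }
  apply (series_int _ _ _ Hb Hx).
  rewrite <- Hf_eval by exact Hy.
  apply (is_RInt_ext_R (ff y)); [reflexivity|].
  apply is_RInt_derive_R; [lra| |].
  - intros t Ht. apply Hf_deriv; auto.
  - intros t Ht. apply cont_ex. unfold ff.
    specialize (Hb t Ht). apply Rabs_le_between in Hb.
    auto_derive. repeat split; auto; lra.
Qed.


Lemma pow_term (p q f D : R) k : p ^ k * q ^ k / (D * f ^ k) = (p * q / f) ^ k / D.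
Proof. unfold Rdiv. rewrite Rinv_mult, !Rpow_mult_distr, pow_inv. ring. Qed.

Lemma s5sq : sqrt 5 * sqrt 5 = 5.
Proof. apply sqrt_sqrt; lra. Qed.

Lemma s5pos : 0 < sqrt 5.
Proof. apply sqrt_lt_R0; lra. Qed.

Lemma sq_div_s5 u : (u / sqrt 5) ^ 2 = u ^ 2 / 5.
Proof. pose proof s5sq. pose proof s5pos. replace 5 with (sqrt 5 * sqrt 5) at 2. field. lra. Qed.

Lemma cube_div_s5 u : 5 * (u / sqrt 5) ^ 3 = u ^ 3 / sqrt 5.
Proof. pose proof s5sq. pose proof s5pos. replace 5 with (sqrt 5 * sqrt 5) at 1. field. lra. Qed.

Lemma s15 : sqrt 15 = sqrt 3 * sqrt 5.
Proof. replace 15 with (3 * 5) by lra. apply sqrt_mult; lra. Qed.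

Lemma part1 (a e : R) : (e = 1 \/ e = -1) -> 8/5 < a ->
  is_series (fun n => (-e) ^ S n * (27 / 5) ^ S n /
      (INR (S n) * Binomial.C (3 * S n) (S n) * ((a ^ 3 - (e / a) ^ 3) / sqrt 5) ^ (2 * S n)))
    (2 * sqrt 15 * (((a - e / a) / sqrt 5) / (a ^ 3 + (e / a) ^ 3))
       * atan (sqrt 3 / (a * (a + (a + e / a))))
     - e * ((a + e / a) / (a ^ 3 + (e / a) ^ 3))
       * ln (((a ^ 3 - (e / a) ^ 3) / sqrt 5) / (5 * ((a - e / a) / sqrt 5) ^ 3))).
Proof.
  intros He Ha.
  set (y := e * a ^ 2).
  assert (Hy : 5/2 <= Rabs y).
  { unfold y. destruct He as [-> | ->]; [rewrite Rabs_pos_eq by nra | rewrite Rabs_left by nra]; nra. }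
  assert (Ha0 : a <> 0) by lra.
  assert (Ha2 : 2 < a * a) by nra.
  assert (Ha6 : 8 < (a * a) ^ 3).
  { set (A := a * a) in *. assert (4 < A * A) by nra. simpl. nra. }
  assert (Ha6' : (a * a) ^ 3 = a ^ 6) by ring.
  assert (Ha2' : a * a = a ^ 2) by ring.
  replace (2 * sqrt 15 * _ * _ - _) with (G y).
  - eapply is_series_ext; [|apply (gen_series y Hy)].
    intros n. cbv beta. rewrite pow_mult, pow_term.
    match goal with |- ?a = ?b => change (@eq R a b) end.
    f_equal. f_equal. rewrite sq_div_s5. unfold xf, y.
    destruct He as [-> | ->]; field; repeat split; auto; try (intro Hc; nra).
  - assert (Hs5 := s5pos).
    assert (Hat : atan (sqrt 3 / (a * (a + (a + e / a)))) = e * atan (sqrt 3 / (2 * y + 1))).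
    { unfold y. destruct He as [-> | ->].
      - rewrite Rmult_1_l. f_equal. field. split; auto. intro Hc; nra.
      - replace (sqrt 3 / (a * (a + (a + -1 / a)))) with (- (sqrt 3 / (2 * (-1 * a ^ 2) + 1))).
        + rewrite atan_opp. ring.
        + field. repeat split; auto; intro Hc; nra. }
    assert (Hpos : 0 < (y - 1) ^ 2 / (y ^ 2 + y + 1)).
    { unfold y. apply Rdiv_lt_0_compat.
      - apply sq_pos. destruct He as [-> | ->]; intro Hc; nra.
      - destruct He as [-> | ->]; nra. }
    assert (Hln : ln (((a ^ 3 - (e / a) ^ 3) / sqrt 5) / (5 * ((a - e / a) / sqrt 5) ^ 3))
                  = - ln ((y - 1) ^ 2 / (y ^ 2 + y + 1))).
    { rewrite cube_div_s5, <- ln_Rinv by exact Hpos. f_equal.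
      unfold y. destruct He as [-> | ->]; field; repeat split; auto; try (intro Hc; nra). }
    rewrite Hat, Hln, s15. unfold G.
    set (T := atan (sqrt 3 / (2 * y + 1))).
    set (Lg := ln ((y - 1) ^ 2 / (y ^ 2 + y + 1))).
    unfold y. destruct He as [-> | ->]; field; repeat split; auto; try (intro Hc; nra).
Qed.

Lemma part2 (a e : R) : (e = 1 \/ e = -1) -> 8/5 < a ->
  is_series (fun n => e ^ S n * 27 ^ S n /
      (INR (S n) * Binomial.C (3 * S n) (S n) * (a ^ 3 + (e / a) ^ 3) ^ (2 * S n)))
    (2 * sqrt 15 / 5 * ((a + e / a) / ((a ^ 3 - (e / a) ^ 3) / sqrt 5))
       * atan (sqrt 3 / (a * (a + sqrt 5 * ((a - e / a) / sqrt 5))))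
     + e * (((a - e / a) / sqrt 5) / ((a ^ 3 - (e / a) ^ 3) / sqrt 5))
       * ln ((a ^ 3 + (e / a) ^ 3) / (a + e / a) ^ 3)).
Proof.
  intros He Ha.
  set (y := - e * a ^ 2).
  assert (Hy : 5/2 <= Rabs y).
  { unfold y. destruct He as [-> | ->]; [rewrite Rabs_left by nra | rewrite Rabs_pos_eq by nra]; nra. }
  assert (Ha0 : a <> 0) by lra.
  assert (Ha2 : 2 < a * a) by nra.
  assert (Ha6 : 8 < (a * a) ^ 3).
  { set (A := a * a) in *. assert (4 < A * A) by nra. simpl. nra. }
  assert (Ha6' : (a * a) ^ 3 = a ^ 6) by ring.
  assert (Ha2' : a * a = a ^ 2) by ring.
  assert (Hs5 := s5pos).
  replace (2 * sqrt 15 / 5 * _ * _ + _) with (G y).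
  - eapply is_series_ext; [|apply (gen_series y Hy)].
    intros n. cbv beta. rewrite pow_mult, pow_term.
    match goal with |- ?a = ?b => change (@eq R a b) end.
    f_equal. f_equal. unfold xf, y.
    destruct He as [-> | ->]; field; repeat split; auto; try (intro Hc; nra).
  - assert (Hat : atan (sqrt 3 / (a * (a + sqrt 5 * ((a - e / a) / sqrt 5)))) = - e * atan (sqrt 3 / (2 * y + 1))).
    { destruct He as [He | He].
      - replace (sqrt 3 / (a * (a + sqrt 5 * ((a - e / a) / sqrt 5)))) with (- (sqrt 3 / (2 * y + 1))).
        + rewrite atan_opp, He. ring.
        + unfold y. rewrite He. field. repeat split; auto; try lra; intro Hc; nra.
      - replace (sqrt 3 / (a * (a + sqrt 5 * ((a - e / a) / sqrt 5)))) with (sqrt 3 / (2 * y + 1)).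
        + rewrite He. ring.
        + unfold y. rewrite He. field. repeat split; auto; try lra; intro Hc; nra. }
    assert (Hpos : 0 < (y - 1) ^ 2 / (y ^ 2 + y + 1)).
    { unfold y. apply Rdiv_lt_0_compat.
      - apply sq_pos. destruct He as [-> | ->]; intro Hc; nra.
      - destruct He as [-> | ->]; nra. }
    assert (Hln : ln ((a ^ 3 + (e / a) ^ 3) / (a + e / a) ^ 3)
                  = - ln ((y - 1) ^ 2 / (y ^ 2 + y + 1))).
    { rewrite <- ln_Rinv by exact Hpos. f_equal.
      unfold y. destruct He as [-> | ->]; field; repeat split; auto; try (intro Hc; nra). }
    rewrite Hat, Hln, s15. unfold G.
    set (T := atan (sqrt 3 / (2 * y + 1))).
    set (Lg := ln ((y - 1) ^ 2 / (y ^ 2 + y + 1))).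
    replace (2 * (sqrt 3 * sqrt 5) / 5 * ((a + e / a) / ((a ^ 3 - (e / a) ^ 3) / sqrt 5)))
      with (2 * sqrt 3 * (sqrt 5 * sqrt 5) / 5 * ((a + e / a) / (a ^ 3 - (e / a) ^ 3))).
    2:{ destruct He as [-> | ->]; field; repeat split; auto; try lra; try (intro Hc; nra). }
    rewrite s5sq.
    unfold y. destruct He as [-> | ->]; field; repeat split; auto; try lra; try (intro Hc; nra).
Qed.

Definition beta : R := (1 - sqrt 5) / 2.

Lemma alpha_sq : alpha * alpha = alpha + 1.
Proof. unfold alpha. pose proof s5sq. nra. Qed.
Lemma beta_sq : beta * beta = beta + 1.
Proof. unfold beta. pose proof s5sq. nra. Qed.
Lemma alpha_beta : alpha * beta = -1.
Proof. unfold alpha, beta. pose proof s5sq. nra. Qed.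

Lemma binet n : (sqrt 5 * F n = alpha ^ n - beta ^ n /\ L n = alpha ^ n + beta ^ n) /\
  (sqrt 5 * F (S n) = alpha ^ S n - beta ^ S n /\ L (S n) = alpha ^ S n + beta ^ S n).
Proof.
  induction n as [|n [IH1 IH2]].
  - unfold F, L. simpl. unfold alpha, beta. split; split; field.
  - split; [exact IH2|]. destruct IH1 as [H1 H2]. destruct IH2 as [H3 H4].
    assert (EF : F (S (S n)) = F (S n) + F n) by (unfold F; change (fib (S (S n))) with (fib (S n) + fib n)%nat; apply plus_INR).
    assert (EL : L (S (S n)) = L (S n) + L n) by (unfold L; change (lucas (S (S n))) with (lucas (S n) + lucas n)%nat; apply plus_INR).
    assert (Ea : alpha ^ S (S n) = alpha ^ S n + alpha ^ n) by (simpl; replace (alpha * (alpha * alpha ^ n)) with ((alpha * alpha) * alpha ^ n) by ring; rewrite alpha_sq; ring).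
    assert (Eb : beta ^ S (S n) = beta ^ S n + beta ^ n) by (simpl; replace (beta * (beta * beta ^ n)) with ((beta * beta) * beta ^ n) by ring; rewrite beta_sq; ring).
    rewrite EF, EL, Ea, Eb. split; lra.
Qed.

Lemma eps_cases r : (-1) ^ r = 1 \/ (-1) ^ r = -1.
Proof. induction r as [|r [H|H]]; simpl; [left; ring| right; rewrite H; ring| left; rewrite H; ring]. Qed.

Theorem corollary5 (r : nat) (hr : (1 <= r)%nat) :
  is_series
    (fun n : nat =>
       let k := S n in
       (-1) ^ ((r - 1) * k) * (27 / 5) ^ k
       / (INR k * Binomial.C (3 * k) k * F (3 * r) ^ (2 * k)))
    (2 * sqrt 15 * (F r / L (3 * r))
       * atan (sqrt 3 / (alpha ^ r * (alpha ^ r + L r)))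
     - (-1) ^ r * (L r / L (3 * r)) * ln (F (3 * r) / (5 * F r ^ 3)))
  /\
  is_series
    (fun n : nat =>
       let k := S n in
       (-1) ^ (r * k) * 27 ^ k
       / (INR k * Binomial.C (3 * k) k * L (3 * r) ^ (2 * k)))
    (2 * sqrt 15 / 5 * (L r / F (3 * r))
       * atan (sqrt 3 / (alpha ^ r * (alpha ^ r + sqrt 5 * F r)))
     + (-1) ^ r * (F r / F (3 * r)) * ln (L (3 * r) / L r ^ 3)).
Proof.
  assert (Hs5 := s5pos).
  set (e := (-1) ^ r).
  assert (He : e = 1 \/ e = -1) by apply eps_cases.
  set (a := alpha ^ r).
  assert (Hal : 8/5 < alpha).
  { unfold alpha. pose proof s5sq. nra. }
  assert (Ha : 8/5 < a).
  { unfold a. destruct r as [|r']; [lia|]. simpl.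
    assert (1 <= alpha ^ r') by (apply pow_R1_Rle; lra). nra. }
  assert (Hb : beta ^ r = e / a).
  { unfold e, a. rewrite <- alpha_beta, Rpow_mult_distr. field. apply pow_nonzero. lra. }
  destruct (binet r) as [[HF HL] _].
  destruct (binet (3 * r)) as [[HF3 HL3] _].
  assert (E3a : alpha ^ (3 * r) = a ^ 3) by (unfold a; rewrite <- pow_mult; f_equal; lia).
  assert (E3b : beta ^ (3 * r) = (beta ^ r) ^ 3) by (rewrite <- pow_mult; f_equal; lia).
  rewrite E3a, E3b, Hb in HF3, HL3. rewrite Hb in HF, HL. fold a in HF, HL.
  assert (HF' : F r = (a - e / a) / sqrt 5) by (rewrite <- HF; field; lra).
  assert (HF3' : F (3 * r) = (a ^ 3 - (e / a) ^ 3) / sqrt 5) by (rewrite <- HF3; field; lra).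
  assert (Hr1 : (-1) ^ (r - 1) = - e).
  { unfold e. destruct r as [|r']; [lia|]. simpl. replace (r' - 0)%nat with r' by lia. ring. }
  split.
  - rewrite HF', HF3', HL, HL3. fold a.
    eapply is_series_ext; [|apply (part1 a e He Ha)].
    intros n. cbv zeta. rewrite pow_mult, Hr1. reflexivity.
  - rewrite HF', HF3', HL, HL3. fold a.
    eapply is_series_ext; [|apply (part2 a e He Ha)].
    intros n. cbv zeta. rewrite pow_mult. reflexivity.
Qed.
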